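(* Let $K$ be a finite field of characteristic $p$, let $L$ be a finite extension of $K$ such that $[L:K]$ is a power of a prime $\ell\neq p$, and let $d$ be an integer with $\gcd(d,|L|-1)=1$. Let $1/d$ denote an integer that is a multiplicative inverse of $d$ modulo $p-1$, and regard $[L:K]$ as a (nonzero) element of $\mathbb{F}_p\subseteq K$. Then for every $a\in K$, $$W_{L,d}(a)\equiv W_{K,d}\big([L:K]^{1-1/d}a\big)\pmod{\ell},$$ where the congruence means that the difference is $\ell$ times an algebraic integer.
   Context: For a finite field $F$ of characteristic $p$, $\psi_F(x)=\exp(2\pi i\,\mathrm{Tr}_{F/\mathbb{F}_p}(x)/p)$; for a field $F$ with $\gcd(d,|F|-1)=1$ and $a\in F$, $W_{F,d}(a)=\sum_{x\in F}\psi_F(x^d+ax)$. *)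

(* Defs.v *)
From HB Require Import structures.
From mathcomp Require Import all_boot all_order all_algebra all_field.
Set Implicit Arguments. Unset Strict Implicit. Unset Printing Implicit Defensive.
Import Order.TTheory GRing.Theory Num.Theory.
Local Open Scope ring_scope.

(* complex numbers are the algebraic numbers algC. *)

Definition fchar (F : finFieldType) : nat := pdiv #|F|.

(* Absolute trace Tr_{F/F_p}(x) = sum_{i < m} x^(p^i), where #|F| = p^m. *)
Definition abs_trace (F : finFieldType) (x : F) : F :=
  \sum_(i < logn (fchar F) #|F|) x ^+ (fchar F ^ i).

(* The trace, which lies in the prime field F_p, as an integer in [0, p). *)
Definition abs_trace_nat (F : finFieldType) (x : F) : nat :=
  odflt 0%N (omap (@nat_of_ord _)
    [pick k : 'I_(fchar F) | (k%:R : F) == abs_trace x]).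

(* exp(2 pi i / p): n.-root (-1) is the n-th root of -1 of minimal
   nonnegative argument, i.e. exp(i pi / n). *)
Definition zeta (p : nat) : algC := (p.-root (-1)) ^+ 2.

Definition psi (F : finFieldType) (x : F) : algC :=
  zeta (fchar F) ^+ abs_trace_nat x.

Definition W (F : finFieldType) (d : int) (a : F) : algC :=
  \sum_(x : F) psi (x ^ d + a * x).

(* Degree [L:K] of a finite field extension iota : K -> L; since L is a
   K-vector space of dimension n, #|L| = #|K|^n. *)
Definition ext_degree (K L : finFieldType) (iota : {rmorphism K -> L}) : nat :=
  trunc_log #|K| #|L|.

(* Main.v *)
Require Import Defs.
From HB Require Import structures.
From mathcomp Require Import all_boot all_order all_algebra all_field all_fingroup all_solvable.
From mathcomp Require Import zify ring.
Import Order.TTheory GRing.Theory Num.Theory.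
Set Implicit Arguments. Unset Strict Implicit. Unset Printing Implicit Defensive.
Local Open Scope ring_scope.

Lemma card_pchar (F : finFieldType) p : p \in [pchar F] ->
  #|F| = (p ^ logn p #|F|)%N /\ (0 < logn p #|F|)%N.
Proof.
move=> pF.
have pr := pcharf_prime pF.
have E : #|F| = (p ^ logn p #|F|)%N := card_pprimeChar pF.
split => //.
rewrite lt0n; apply/negP => /eqP H.
by have := finNzRing_gt1 F; rewrite E H.
Qed.

Lemma fchar_eq (F : finFieldType) p : p \in [pchar F] -> fchar F = p.
Proof.
move=> pF; have [E lt] := card_pchar pF.
rewrite /fchar E -(prednK lt) pdiv_pfactor //; exact: pcharf_prime pF.
Qed.

Lemma trace_frob (F : finFieldType) p (w : F) : p \in [pchar F] ->
  abs_trace (w ^+ p) = abs_trace w.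
Proof.
move=> pF; have [E lt] := card_pchar pF.
rewrite /abs_trace (fchar_eq pF).
move: lt E; set M := logn p #|F| => lt E.
rewrite -(prednK lt) big_ord_recr big_ord_recl /= addrC; congr (_ + _).
  by rewrite -exprM mulnC -expnSr prednK // -E expf_card expn0 expr1.
by apply: eq_bigr => i _; rewrite -exprM -expnS.
Qed.

Lemma trace_frobX (F : finFieldType) p j (w : F) : p \in [pchar F] ->
  abs_trace (w ^+ (p ^ j)) = abs_trace w.
Proof.
move=> pF; elim: j => [|j IH]; first by rewrite expn0 expr1.
by rewrite expnSr exprM trace_frob.
Qed.

Lemma atn_frobX (F : finFieldType) p j (w : F) : p \in [pchar F] ->
  abs_trace_nat (w ^+ (p ^ j)) = abs_trace_nat w.
Proof. by move=> pF; rewrite /abs_trace_nat trace_frobX. Qed.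

Lemma atn_transfer (K L : finFieldType) (iota : {rmorphism K -> L}) p (x : L) (y : K) :
  p \in [pchar K] -> abs_trace x = iota (abs_trace y) ->
  abs_trace_nat x = abs_trace_nat y.
Proof.
move=> pK Hx; have pL : p \in [pchar L] by rewrite (fmorph_pchar iota).
rewrite /abs_trace_nat Hx; move: (abs_trace y) => t.
rewrite (fchar_eq pK) (fchar_eq pL); congr (odflt _ (omap _ _)).
by apply: eq_pick => k /=; rewrite -(rmorph_nat iota) (inj_eq (fmorph_inj iota)).
Qed.

Lemma psi_transfer (K L : finFieldType) (iota : {rmorphism K -> L}) p (x : L) (y : K) :
  p \in [pchar K] -> abs_trace x = iota (abs_trace y) -> psi x = psi y.
Proof.
move=> pK Hx; have pL : p \in [pchar L] by rewrite (fmorph_pchar iota).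
by rewrite /psi (atn_transfer pK Hx) (fchar_eq pK) (fchar_eq pL).
Qed.

Lemma roots_bound (F : fieldType) g (rs : seq F) : (0 < g)%N -> uniq rs ->
  (forall x, x \in rs -> x ^+ g = 1) -> (size rs <= g)%N.
Proof.
move=> g0 U H.
have nz : ('X^g - 1%:P : {poly F}) != 0.
  by rewrite -size_poly_eq0 size_XnsubC.
have := max_poly_roots nz _ U; rewrite size_XnsubC // ltnS; apply.
by apply/allP => x /H hx; rewrite rootE !hornerE hx subrr.
Qed.

Lemma pow_gcd (F : fieldType) (x : F) a b : (0 < a)%N -> x ^+ a = 1 -> x ^+ b = 1 ->
  x ^+ (gcdn a b) = 1.
Proof.
move=> a0 ha hb; case: (egcdnP b a0) => km kn E _.
have : x ^+ (km * a) = x ^+ (kn * b + gcdn a b) by rewrite E.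
by rewrite exprD !(mulnC km) !(mulnC kn) !exprM ha hb !expr1n mul1r => <-.
Qed.

Lemma pow_card1 (F : finFieldType) (x : F) : x != 0 -> x ^+ #|F|.-1 = 1.
Proof.
move=> nz; apply: (mulfI nz); rewrite mulr1 -exprS prednK ?expf_card //.
exact: (ltn_trans _ (finNzRing_gt1 F)).
Qed.

Lemma count_nz (T : finType) (x : T) : count (fun y => y != x) (enum T) = #|T|.-1.
Proof. rewrite -(cardC1 x) cardE /enum_mem size_filter.
rewrite count_filter; apply: eq_count => y; by rewrite /= !inE andbT. Qed.

Lemma card_dvd (K L : finFieldType) (iota : {rmorphism K -> L}) :
  (#|K|.-1 %| #|L|.-1)%N.
Proof.
have q1 : (0 < #|K|.-1)%N by rewrite -ltnS prednK ?finNzRing_gt1 // (ltn_trans _ (finNzRing_gt1 K)).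
set g := gcdn #|K|.-1 #|L|.-1.
have g0 : (0 < g)%N by rewrite gcdn_gt0 q1.
pose rs := [seq iota y | y <- [seq y <- enum K | y != 0]].
have : (size rs <= g)%N.
  apply: roots_bound => //.
    by rewrite (map_inj_uniq (fmorph_inj iota)) filter_uniq ?enum_uniq.
  move=> x /mapP [y]; rewrite mem_filter => /andP [ny _] ->.
  have nz : iota y != 0 by rewrite fmorph_eq0.
  apply: pow_gcd => //; last exact: pow_card1.
  by rewrite -rmorphXn pow_card1 // rmorph1.
rewrite size_map size_filter count_nz.
move=> le; have : g = #|K|.-1.
  by apply/eqP; rewrite eqn_leq le dvdn_leq ?dvdn_gcdl.
by move=> <-; rewrite dvdn_gcdr.
Qed.

Local Close Scope ring_scope.
Lemma exp_dvd_arith p m M : (1 < p)%N -> (0 < m)%N -> ((p ^ m).-1 %| (p ^ M).-1)%N -> (m %| M)%N.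
Proof.
move=> p1 m0 H.
have [->|m1] := eqVneq m 1; first exact: dvd1n.
have m2 : (2 <= m)%N by lia.
set N := (p ^ m).-1.
have pm4 : (4 <= p ^ m)%N.
  have h1 : (p ^ 2 <= p ^ m)%N by rewrite leq_exp2l.
  have h2 : p ^ 2 = p * p by rewrite expnS expn1.
  nia.
have EN : p ^ m = N + 1 by rewrite /N; lia.
have Hpm : p ^ m = 1 %[mod N] by rewrite EN modnDl.
set r := M %% m; set s := M %/ m.
have EM : M = s * m + r by rewrite /r /s -divn_eq.
have A : p ^ M = p ^ r %[mod N].
  rewrite EM expnD (mulnC s m) expnM.
  have Hs : (p ^ m) ^ s = 1 %[mod N] by rewrite -modnXm Hpm modnXm exp1n.
  by rewrite -modnMml Hs modnMml mul1n.
have B : p ^ M = 1 %[mod N].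
  have pM0 : (0 < p ^ M)%N by rewrite expn_gt0 (ltn_trans _ p1).
  have -> : p ^ M = (p ^ M).-1 + 1 by rewrite addn1 prednK.
  by case/dvdnP: H => k ->; rewrite modnMDl.
have rlt : (r < m)%N by rewrite /r ltn_mod.
have prle : (p ^ r * p <= p ^ m)%N.
  by rewrite -expnSr leq_exp2l.
have pr0 : (0 < p ^ r)%N by rewrite expn_gt0 (ltn_trans _ p1).
have prN : (p ^ r < N)%N.
  rewrite /N; move: prle pr0 pm4 p1; clear; move: (p ^ r) (p ^ m) => a b; nia.
have N1 : (1 < N)%N by rewrite /N; move: pm4; clear; move: (p ^ m) => b; lia.
have : p ^ r = 1 by move: B; rewrite A !modn_small.
move=> pr1.
have r0 : r = 0%N.
  case: (posnP r) => // rpos.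
  have : (p ^ 1 <= p ^ r)%N by rewrite leq_exp2l.
  by rewrite pr1 expn1 leqNgt p1.
by apply/dvdnP; exists s; rewrite {1}EM r0 addn0.
Qed.

Local Open Scope ring_scope.

Lemma deg_lemma (K L : finFieldType) (iota : {rmorphism K -> L}) p :
  p \in [pchar K] -> #|L| = (#|K| ^ ext_degree iota)%N.
Proof.
move=> pK; have pL : p \in [pchar L] by rewrite (fmorph_pchar iota).
have pr := pcharf_prime pK; have p1 := prime_gt1 pr.
have [EK m0] := card_pchar pK; have [EL _] := card_pchar pL.
have := card_dvd iota; rewrite {1}EK {1}EL => /exp_dvd_arith => /(_ p1 m0).
move: m0 EK EL; set m := logn p #|K|; set M := logn p #|L| => m0 EK EL.
case/dvdnP => N EM.
have EL' : #|L| = (#|K| ^ N)%N by rewrite EL EK EM mulnC expnM.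
rewrite /ext_degree EL' trunc_expnK //.
by rewrite EK (leq_trans p1) // -{1}(expn1 p) leq_exp2l.
Qed.

Lemma fixed_in_image (K L : finFieldType) (iota : {rmorphism K -> L}) (x : L) :
  x ^+ #|K| = x -> x \in codom iota.
Proof.
move=> hx; apply/negPn/negP => nx.
have x0 : x != 0 by apply: contraNneq nx => ->; apply/codomP; exists 0; rewrite rmorph0.
have q1 : (0 < #|K|.-1)%N by rewrite -ltnS prednK ?finNzRing_gt1 // (ltn_trans _ (finNzRing_gt1 K)).
pose rs := x :: [seq iota y | y <- [seq y <- enum K | y != 0]].
have : (size rs <= #|K|.-1)%N.
  apply: roots_bound => //.
    rewrite /rs cons_uniq (map_inj_uniq (fmorph_inj iota)) filter_uniq ?enum_uniq // andbT.
    apply: contra nx => /mapP [y _ ->]; apply/codomP; by exists y.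
  move=> z; rewrite inE => /orP [/eqP ->|].
    apply: (mulfI x0); rewrite mulr1 -exprS prednK ?hx //.
    exact: (ltn_trans _ (finNzRing_gt1 K)).
  move=> /mapP [y]; rewrite mem_filter => /andP [ny _] ->.
  by rewrite -rmorphXn pow_card1 // rmorph1.
by rewrite /= size_map size_filter count_nz ltnn.
Qed.

Lemma nat_frob (F : finFieldType) p j n : p \in [pchar F] -> (n%:R : F) ^+ (p ^ j) = n%:R.
Proof.
move=> pF; elim: j => [|j IH]; first by rewrite expn0 expr1.
by rewrite expnSr exprM IH -(pFrobenius_autE pF) pFrobenius_aut_nat.
Qed.

Lemma trace_transfer (K L : finFieldType) (iota : {rmorphism K -> L}) p N :
  p \in [pchar K] -> #|L| = (#|K| ^ N)%N ->
  forall z : K, abs_trace (iota z) = iota (abs_trace (N%:R * z)).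
Proof.
move=> pK EL z; have pL : p \in [pchar L] by rewrite (fmorph_pchar iota).
have pr := pcharf_prime pK.
have [EK m0] := card_pchar pK.
rewrite /abs_trace (fchar_eq pK) (fchar_eq pL).
have -> : logn p #|L| = (logn p #|K| * N)%N by rewrite EL {1}EK -expnM pfactorK.
move: m0 EK; set m := logn p #|K| => m0 EK.
have key : \sum_(i < m * N) z ^+ (p ^ i) = N%:R * \sum_(i < m) z ^+ (p ^ i).
  elim: N {EL} => [|N IH]; first by rewrite muln0 big_ord0 mul0r.
  rewrite mulnS addnC big_split_ord /= IH -addn1 natrD mulrDl mul1r; congr (_ + _).
  apply: eq_bigr => i _ /=.
  rewrite expnD exprM.
  have -> : z ^+ (p ^ (m * N)) = z.
    rewrite expnM -EK; elim: (N) => [|k IHk]; first by rewrite expn0 expr1.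
    by rewrite expnSr exprM IHk expf_card.
  by [].
rewrite (eq_bigr (fun i : 'I_(m * N) => iota (z ^+ (p ^ i)))) => [|i _]; last by rewrite rmorphXn.
rewrite -rmorph_sum key; congr (iota _).
rewrite mulr_sumr; apply: eq_bigr => i _.
by rewrite exprMn nat_frob.
Qed.

Lemma sum_partition (T : finType) (P : pred T) (h : T -> nat) (N : nat) (c : algC) :
  (forall x, (h x < N)%N) ->
  \sum_(x | P x) c ^+ (h x) = \sum_(j < N) (#|[set x | P x && (h x == j)]|)%:R * c ^+ j.
Proof.
move=> hlt.
rewrite (partition_big (fun x => Ordinal (hlt x)) xpredT) //=.
apply: eq_bigr => j _.
transitivity (\sum_(x in [set x | P x && (h x == j)]) c ^+ j).
  apply: eq_big => x; first by rewrite inE -val_eqE.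
  by move=> /andP [_]; rewrite -val_eqE /= => /eqP ->.
by rewrite sumr_const mulr_natl.
Qed.

Lemma atn_lt (F : finFieldType) (x : F) : (abs_trace_nat x < fchar F)%N.
Proof.
rewrite /abs_trace_nat; case: pickP => [k _|_] /=; first exact: ltn_ord.
rewrite /fchar pdiv_gt0 //.
Qed.

Lemma fix_count (L : finFieldType) (q l n : nat) (S : {set L}) :
  (0 < n)%N -> l.-nat n -> (forall x : L, x ^+ (q ^ n) = x) ->
  (forall x, (x ^+ q \in S) = (x \in S)) ->
  #|S| = #|[set x in S | x ^+ q == x]| %[mod l].
Proof.
move=> n0 ln Hn HS.
have inj : injective (fun x : L => x ^+ q).
  apply: (can_inj (g := fun x : L => x ^+ (q ^ n.-1))) => x /=.
  by rewrite -exprM -expnS prednK.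
pose phi := perm inj.
have phiE : forall x, phi x = x ^+ q by move=> x; rewrite permE.
have iterE : forall j x, iter j phi x = x ^+ (q ^ j).
  elim=> [|j IH] x /=; first by rewrite expn0 expr1.
  by rewrite IH phiE -exprM -expnSr.
have lg : (l.-group <[phi]>)%g.
  rewrite /pgroup; apply: pnat_dvd ln.
  rewrite order_dvdn; apply/eqP/permP => x.
  by rewrite permX perm1 iterE Hn.
have acts : ([acts <[phi]>, on S | 'P])%g.
  rewrite cycle_subG; apply/astabsP => x.
  by rewrite /= apermE phiE HS.
have := pgroup_fix_mod lg acts.
have -> : ('Fix_(S | 'P)(<[phi]>))%g = [set x in S | x ^+ q == x] => //.
apply/setP => x; rewrite in_setI [in RHS]inE afix_cycle.
congr (_ && _); apply/afix1P/eqP; by rewrite /= apermE phiE.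
Qed.

Lemma zeta_Aint p : (0 < p)%N -> zeta p \in Aint.
Proof.
move=> p0; apply: (Aint_unity_root p0); rewrite unity_rootE /zeta.
by rewrite -exprM mulnC exprM rootCK // sqrrN expr1n.
Qed.

Lemma K_side (K : finFieldType) p (d e : int) (n : nat) (a : K) :
  p \in [pchar K] -> (n%:R : K) != 0 -> (d * e == 1 %[mod (p.-1)%:Z])%Z ->
  \sum_(y : K) psi ((n%:R : K) * (y ^ d + a * y)) = W d ((n%:R : K) ^ (1 - e) * a).
Proof.
move=> pK nz Hde.
have pr := pcharf_prime pK.
set c := (n%:R : K) ^ (- e).
have cnz : c != 0 by rewrite expfz_neq0.
have np : (n%:R : K) ^+ p.-1 = 1.
  apply: (mulfI nz); rewrite mulr1 -exprS prednK ?prime_gt0 //.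
  by rewrite -(pFrobenius_autE pK) pFrobenius_aut_nat.
have [t Ht] : exists t, d * e - 1 = t * (p.-1)%:Z.
  by apply/dvdzP; rewrite -eqz_mod_dvd.
have ncd : (n%:R : K) * c ^ d = 1.
  rewrite /c exprz_exp -[X in X * _]expr1z -expfzDr //.
  have -> : 1 + - e * d = (p.-1)%:Z * (- t) by rewrite mulrN (mulrC _ t) -Ht; ring.
  by rewrite -exprz_exp -exprnP np exp1rz.
have nc : (n%:R : K) * c = (n%:R : K) ^ (1 - e).
  by rewrite /c -[X in X * _]expr1z -expfzDr.
rewrite /W (reindex_inj (mulfI cnz)) /=; apply: eq_bigr => u _.
congr psi.
rewrite expfzMl mulrDr [_ * (c ^ d * _)]mulrA ncd mul1r -nc; congr (_ + _); ring.
Qed.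

Theorem lemma3p3 (K L : finFieldType) (iota : {rmorphism K -> L})
    (p l : nat) (d e : int) :
  p \in [pchar K] ->
  prime l -> l != p ->
  (exists k : nat, ext_degree iota = (l ^ k)%N) ->
  coprimez d (#|L|.-1)%:Z ->
  (d * e == 1 %[mod (p.-1)%:Z])%Z ->
  forall a : K,
    exists z : algC, z \in Aint /\
      W d (iota a) - W d ((ext_degree iota)%:R ^ (1 - e) * a) = l%:R * z.
Proof.
move=> pK lpr lnp [k Hdeg] _ Hde a.
have pL : p \in [pchar L] by rewrite (fmorph_pchar iota).
have pr : prime p := pcharf_prime pK.
have EL : #|L| = (#|K| ^ ext_degree iota)%N := deg_lemma iota pK.
move: Hdeg EL; set n := ext_degree iota => Hdeg EL.
have [EK _] := card_pchar pK.
have nz : (n%:R : K) != 0.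
  rewrite -(dvdn_pcharf pK) Hdeg Euclid_dvdX // dvdn_prime2 // eq_sym.
  by rewrite (negPf lnp).
set a' := iota a.
pose h (x : L) := abs_trace_nat (x ^ d + a' * x).
have hlt : forall x, (h x < p)%N by move=> x; rewrite -(fchar_eq pL) atn_lt.
pose Fx := iota @: [set: K].
pose S (j : nat) := [set x : L | true && (h x == j)].
pose T (j : nat) := [set x : L | (x \in Fx) && (h x == j)].
have hq : forall x : L, h (x ^+ #|K|) = h x.
  move=> x; rewrite /h.
  have -> : (x ^+ #|K|) ^ d + a' * x ^+ #|K| = (x ^ d + a' * x) ^+ #|K|.
    have e1 : (x ^+ #|K|) ^ d = (x ^ d) ^+ #|K| := exprzAC x #|K| d.
    rewrite e1 exprDn_pchar; last by rewrite EK pnatX (pnatE _ pr) pL.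
    by rewrite exprMn /a' -rmorphXn expf_card.
  by rewrite EK atn_frobX.
have fixE : forall x : L, (x ^+ #|K| == x) = (x \in Fx).
  move=> x; rewrite /Fx; apply/eqP/imsetP => [/(@fixed_in_image K L iota x) /codomP [y ->]|[y _ ->]].
    by exists y.
  by rewrite -rmorphXn expf_card.
have countj : forall j : nat, #|S j| = #|T j| %[mod l] /\ (#|T j| <= #|S j|)%N.
  move=> j; split; last first.
    by apply: subset_leq_card; apply/subsetP => x; rewrite !inE => /andP [_ ->].
  rewrite (@fix_count L #|K| l n (S j)).
  - congr (_ %% _)%N; apply: eq_card => x; rewrite !inE fixE andbC //.
  - by rewrite Hdeg expn_gt0 prime_gt0.
  - by rewrite Hdeg pnatX pnat_id.
  - by move=> x; rewrite -EL expf_card.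
  - by move=> x; rewrite !inE hq.
pose z := \sum_(j < p) ((#|S j| - #|T j|) %/ l)%:R * zeta p ^+ j.
exists z; split.
  apply: rpred_sum => j _; apply: rpredM; first exact: rpred_nat.
  by apply: rpredX; apply: zeta_Aint; apply: prime_gt0.
have WL : W d a' = \sum_(j < p) #|S j|%:R * zeta p ^+ j.
  rewrite -(@sum_partition L (fun _ => true) h p (zeta p) hlt) /W.
  by apply: eq_bigr => x _; rewrite /psi (fchar_eq pL).
have WK : W d (n%:R ^ (1 - e) * a) = \sum_(j < p) #|T j|%:R * zeta p ^+ j.
  rewrite -(@sum_partition L (fun x => x \in Fx) h p (zeta p) hlt) /=.
  rewrite -(@K_side K p d e n a pK nz Hde).
  rewrite /Fx big_imset /=; last by move=> x y _ _; apply: fmorph_inj.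
  rewrite big_set /=.
  apply: eq_bigr => y _.
  have -> : zeta p ^+ h (iota y) = psi (iota y ^ d + a' * iota y).
    by rewrite /psi (fchar_eq pL).
  symmetry; apply: (psi_transfer pK).
  rewrite /a' -fmorphXz -rmorphM -rmorphD.
  exact: trace_transfer pK EL _.
rewrite WL WK -sumrB mulr_sumr; apply: eq_bigr => j _.
have [cm cle] := countj j.
rewrite -mulrBl mulrA -natrM -natrB // mulnC divnK //.
by rewrite -eqn_mod_dvd // cm.
Qed.
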